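(* Define $d_0=-1$ and, for $k\ge1$, $d_k=M(k,1,\mathbf{F}_q^* )-M(k,0,\mathbf{F}_q^* )$. Then $d_1=1$, and for $2\le k\le q-1$: $d_k=-k\,d_{k-1}$ if $p\nmid k$, and $d_k=(q-k)\,d_{k-1}$ if $p\mid k$, where $p$ is the characteristic of $\mathbf{F}_q$.
   Context: $M(k,b,D)$ denotes the number of ordered $k$-tuples $(x_1,\dots,x_k)$ of pairwise distinct elements of $D\subseteq\mathbf{F}_q$ with $x_1+\dots+x_k=b$. *)

(* Defs.v *)
From HB Require Import structures.
From mathcomp Require Import all_boot all_order all_algebra all_field.
Set Implicit Arguments. Unset Strict Implicit. Unset Printing Implicit Defensive.
Import GRing.Theory Num.Theory.
Local Open Scope ring_scope.

Definition M (F : finFieldType) (k : nat) (b : F) (D : {set F}) : nat :=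
  #|[set t : k.-tuple F | [&& uniq t, all (fun x => x \in D) t &
                              \sum_(x <- t) x == b]]|.

Definition Fstar (F : finFieldType) : {set F} := [set x : F | x != 0].

Definition d (F : finFieldType) (k : nat) : int :=
  if k is 0 then -1 else (M k 1 (Fstar F))%:Z - (M k 0 (Fstar F))%:Z.

(* Main.v *)
Require Import Defs.
From HB Require Import structures.
From mathcomp Require Import all_boot all_order all_algebra all_field.
Import GRing.Theory Num.Theory.
Local Open Scope ring_scope.

Section Aux.
Variable F : finFieldType.

Lemma card_le_inj (T U : finType) (A : {set T}) (B : {set U}) (f : T -> U) :
  {in A &, injective f} -> (forall x, x \in A -> f x \in B) -> (#|A| <= #|B|)%N.
Proof.
move=> inj fAB; rewrite -(card_in_imset inj); apply: subset_leq_card.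
by apply/subsetP => y /imsetP [x xA ->]; apply: fAB.
Qed.

Lemma sum_shift (c : F) (s : seq F) :
  \sum_(x <- map (fun x => x + c) s) x = \sum_(x <- s) x + c *+ size s.
Proof.
elim: s => [|y s IH] /=; first by rewrite !big_nil addr0.
rewrite !big_cons IH mulrS. rewrite !addrA; congr (_ + _); rewrite -!addrA; congr (_ + _); exact: addrC.
Qed.

Lemma sum_shiftN (c : F) (s : seq F) :
  \sum_(x <- map (fun x => x - c) s) x = \sum_(x <- s) x - c *+ size s.
Proof. by rewrite sum_shift mulNrn. Qed.

Definition Pset n (b : F) : {set n.-tuple F} :=
  [set t : n.-tuple F | uniq t && (\sum_(x <- t) x == b)].
Definition Nset n (b : F) : {set n.-tuple F} :=
  [set t : n.-tuple F | [&& uniq t, all (fun x => x \in Fstar F) t &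
                              \sum_(x <- t) x == b]].

Lemma MN n b : M n b (Fstar F) = #|Nset n b|.
Proof. by []. Qed.

Lemma shift_le n (b1 b2 c : F) : b1 + n%:R * c = b2 ->
  (#|Pset n b1| <= #|Pset n b2|)%N.
Proof.
move=> e; apply: (@card_le_inj _ _ _ _ (map_tuple (fun x => x + c))).
  move=> t1 t2 _ _ /(congr1 val) /= /(inj_map (addIr c)) h; exact: val_inj.
move=> t; rewrite !inE => /andP [u s]; apply/andP; split.
  by rewrite /= map_inj_uniq //; apply: addIr.
by rewrite /= sum_shift size_tuple (eqP s) -mulr_natl e.
Qed.

Lemma Pcard_eq n (b1 b2 : F) : (n%:R : F) != 0 -> #|Pset n b1| = #|Pset n b2|.
Proof.
move=> nz; apply/eqP; rewrite eqn_leq; apply/andP; split.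
  apply: (@shift_le n b1 b2 ((b2 - b1) / n%:R)).
  by rewrite mulrC divfK // addrC subrK.
apply: (@shift_le n b2 b1 ((b1 - b2) / n%:R)).
by rewrite mulrC divfK // addrC subrK.
Qed.

Lemma Pcard_div n (b : F) : ((n.+1)%:R : F) = 0 ->
  #|Pset n.+1 b| = (#|F| * #|Nset n b|)%N.
Proof.
move=> k0.
have kc : forall c : F, c *+ n.+1 = 0 by move=> c; rewrite -mulr_natl k0 mul0r.
rewrite -cardsT -cardsX; apply/eqP; rewrite eqn_leq; apply/andP; split.
  apply: (@card_le_inj _ _ _ _
    (fun t : n.+1.-tuple F => (thead t, map_tuple (fun x => x - thead t) (behead_tuple t)))).
    move=> t1 t2; case/tupleP: t1 => x1 s1; case/tupleP: t2 => x2 s2 _ _ [].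
    rewrite !theadE => e; subst x2 => h.
    have /val_inj -> : val s1 = val s2 := inj_map (addIr (-x1)) h. by [].
  move=> t; case/tupleP: t => x s; rewrite !inE /= big_cons theadE => /andP [/andP [xs us] sb].
  apply/and3P; split.
  - by rewrite map_inj_uniq //; apply: addIr.
  - apply/allP => y /mapP [z zs ->]; rewrite inE subr_eq0.
    by apply/eqP => e; subst z; rewrite zs in xs.
  - rewrite sum_shiftN size_tuple -(eqP sb).
    have e : - (x *+ n) = x by apply/esym/eqP; rewrite -addr_eq0 -mulrS kc.
    by rewrite e addrC.
apply: (@card_le_inj _ _ _ _
  (fun p : F * n.-tuple F => [tuple of p.1 :: map (fun x => x + p.1) p.2])).
  move=> [c1 s1] [c2 s2] _ _ /(congr1 val) /= [e]; subst c2 => h.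
  by have /val_inj -> : val s1 = val s2 := inj_map (addIr c1) h.
move=> [c s]; rewrite !inE /= => /and3P [us ss sb].
rewrite big_cons sum_shift size_tuple (eqP sb).
rewrite addrCA -mulrS kc addr0 eqxx andbT.
rewrite map_inj_uniq ?us ?andbT; last exact: addIr.
apply/negP => /mapP => [[y ys]] e.
have y0 : y = 0 by apply: (addIr c); rewrite add0r -e.
by subst y; move/allP: ss => /(_ _ ys); rewrite inE eqxx.
Qed.

Lemma nth0rot (T : Type) (x0 : T) (s : seq T) (i : nat) :
  (i < size s)%N -> nth x0 (rot i s) 0 = nth x0 s i.
Proof.
by move=> h; rewrite /rot nth_cat size_drop subn_gt0 h nth_drop addn0.
Qed.

Lemma seq_eta (T : Type) (x0 : T) (s : seq T) :
  (0 < size s)%N -> s = nth x0 s 0 :: behead s.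
Proof. by case: s. Qed.

Lemma sum_perm (s1 s2 : seq F) : perm_eq s1 s2 ->
  \sum_(x <- s1) x = \sum_(x <- s2) x.
Proof. exact: perm_big. Qed.

Lemma sum_rot i (s : seq F) : \sum_(x <- rot i s) x = \sum_(x <- s) x.
Proof. by apply: sum_perm; rewrite perm_rot. Qed.

Lemma sum_rotr i (s : seq F) : \sum_(x <- rotr i s) x = \sum_(x <- s) x.
Proof. by apply: sum_perm; rewrite perm_rotr. Qed.

Lemma fiber n (b : F) (i : 'I_n.+1) :
  #|Pset n.+1 b :&: [set t | tnth t i == 0]| = #|Nset n b|.
Proof.
have hi : forall (t : n.+1.-tuple F), (i < size t)%N by move=> t; rewrite size_tuple.
have key : forall t : n.+1.-tuple F, tnth t i = 0 -> val (rot_tuple i t) = 0 :: behead (rot i t).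
  move=> t ti /=; rewrite {1}(@seq_eta _ 0 (rot i t)) ?size_rot ?size_tuple //.
  by rewrite nth0rot ?hi // -tnth_nth ti.
apply/eqP; rewrite eqn_leq; apply/andP; split.
  apply: (@card_le_inj _ _ _ _ (fun t => behead_tuple (rot_tuple i t))).
    move=> t1 t2; rewrite !inE => /andP [_ /eqP h1] /andP [_ /eqP h2] /(congr1 val) /= e.
    apply: val_inj; apply: (@rot_inj i).
    by rewrite -[rot i t1]/(val (rot_tuple i t1)) -[rot i t2]/(val (rot_tuple i t2)) !key // e.
  move=> t; rewrite !inE => /andP [/andP [ut /eqP st] /eqP ti].
  have := key t ti; rewrite /= => e.
  have : uniq (rot i t) by rewrite rot_uniq.
  rewrite e /= => /andP [nz ub]; rewrite ub /=; apply/andP; split.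
    by apply/allP => y yb; rewrite inE; apply: contraNneq nz => <-.
  have := sum_rot i t; rewrite e big_cons add0r st => ->; exact: eqxx.
apply: (@card_le_inj _ _ _ _ (fun s => rotr_tuple i (cons_tuple 0 s))).
  move=> s1 s2 _ _ /(congr1 val) /= /rotr_inj [] h; exact: val_inj.
move=> s; rewrite !inE => /and3P [us ss /eqP sb].
have nz : 0 \notin s by apply/negP => /(allP ss); rewrite inE eqxx.
apply/andP; split; [apply/andP; split|].
- by rewrite /= rotr_uniq /= nz us.
- by rewrite /= sum_rotr big_cons add0r sb.
- apply/eqP; rewrite (tnth_nth 0) /= -nth0rot ?size_rotr ?size_tuple // rotrK //.
Qed.

Lemma card_sum (T : finType) (A : {set T}) (P : pred T) :
  #|A :&: [set t | P t]| = (\sum_(t in A) P t)%N.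
Proof.
rewrite -sum1_card [LHS]big_mkcond [RHS]big_mkcond /=.
by apply: eq_bigr => t _; rewrite !inE; case: (t \in A); case: (P t).
Qed.

Lemma count_tnth m (t : m.-tuple F) (x : F) :
  (\sum_(i < m) (tnth t i == x))%N = count_mem x t.
Proof.
rewrite -(big_tuple 0%N addn t xpredT (fun y => nat_of_bool (y == x))).
elim: (val t) => [|y s IH]; first by rewrite big_nil.
by rewrite big_cons IH.
Qed.

Lemma Zsplit n (b : F) :
  #|Pset n.+1 b| = (#|Nset n.+1 b| + n.+1 * #|Nset n b|)%N.
Proof.
rewrite -(cardsID [set t : n.+1.-tuple F | 0 \in t] (Pset n.+1 b)) addnC.
congr (_ + _)%N.
  apply: eq_card => t; rewrite !inE.
  case: (boolP (0 \in t)) => z /=.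
    apply/esym/negP => /and3P [_ /allP a _].
    by have := a _ z; rewrite inE eqxx.
  suff -> : all (fun x => x \in Fstar F) t by [].
  apply/allP => y yt; rewrite inE; apply: contraNneq z => <-; exact: yt.
rewrite card_sum.
rewrite (eq_bigr (fun t : n.+1.-tuple F => \sum_(i < n.+1) nat_of_bool (tnth t i == 0%R :> F))%N); last first.
  move=> t; rewrite inE => /andP [ut _]; by rewrite count_tnth count_uniq_mem.
rewrite exchange_big /=.
rewrite (eq_bigr (fun _ => #|Nset n b|)); last first.
  by move=> i _; rewrite -card_sum fiber.
by rewrite sum_nat_const card_ord.
Qed.
End Aux.

Lemma sub_swap (R : zmodType) (a b c e : R) : (a - b) - (c - e) = (a - c) - (b - e).
Proof. by rewrite !opprB addrACA [RHS]addrACA [- c + _]addrC. Qed.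

Lemma Nset0 (F : finFieldType) (b : F) : #|Nset F 0 b| = (b == 0 : nat).
Proof.
have -> : Nset F 0 b = [set t : 0.-tuple F | b == 0].
  by apply/setP => t; rewrite !inE tuple0 big_nil /= eq_sym.
case: (b == 0); last by rewrite cards0.
by rewrite cardsT card_tuple expn0.
Qed.

Lemma Nint (F : finFieldType) n (b : F) :
  (#|Nset F n.+1 b|)%:Z = (#|Pset F n.+1 b|)%:Z - (n.+1)%:Z * (#|Nset F n b|)%:Z.
Proof. by rewrite Zsplit PoszD PoszM addrK. Qed.

Theorem lemma2p4 (F : finFieldType) (p : nat) (hp : p \in [pchar F]) :
  d F 1 = 1 /\
  (forall k : nat, (2 <= k)%N -> (k <= #|F| - 1)%N ->
     d F k = if (p %| k)%N then (#|F|%:Z - k%:Z) * d F k.-1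
             else - (k%:Z) * d F k.-1).
Proof.
split.
  rewrite /d !MN !Nint !Nset0 oner_eq0 eqxx mul1r subr0.
  rewrite (@Pcard_eq F 1 1 0) ?oner_eq0 //.
  by rewrite opprB addrC subrK.
case=> [|[|n]] // _ _.
rewrite /d /= !MN !(Nint F n.+1) (dvdn_pcharf hp).
case: ifP => hk.
  by rewrite !Pcard_div ?(eqP hk) // !PoszM -!mulrBl -mulrBr.
rewrite (@Pcard_eq F n.+2 1 0) ?hk //.
by rewrite sub_swap subrr sub0r -mulrBr mulNr.
Qed.
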